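(* Let $m$ be a positive integer with at least two distinct prime divisors. Then the difference graph $\mathcal{D}(\mathbb{Z}_m)$ is empty (has no edges) if and only if $m=pq$ where $p$ and $q$ are two distinct primes.
   Context: For a finite group $G$ with identity $e$: the intersection power graph $\mathcal{G}_I(G)$ has vertex set $G$, two distinct non-identity vertices $x,y$ being adjacent iff $\langle x\rangle\cap\langle y\rangle\neq\{e\}$, and $e$ being adjacent to every other vertex. The power graph $\mathcal{P}(G)$ has vertex set $G$, two distinct vertices being adjacent iff one is a power of the other. The difference graph $\mathcal{D}(G)$ is the graph on vertex set $G$ with edge set $E(\mathcal{G}_I(G))\setminus E(\mathcal{P}(G))$, with all isolated vertices removed. $\mathbb{Z}_m$ is the cyclic group of order $m$. *)

(* Defs.v *)
From mathcomp Require Import all_boot all_fingroup all_algebra.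
Set Implicit Arguments. Unset Strict Implicit. Unset Printing Implicit Defensive.
Local Open Scope group_scope.

Definition ipg_adj (gT : finGroupType) (x y : gT) : bool :=
  (x != y) && [|| x == 1, y == 1 | <[x]> :&: <[y]> != 1].

Definition pg_adj (gT : finGroupType) (x y : gT) : bool :=
  (x != y) && ((x \in <[y]>) || (y \in <[x]>)).

(* Edges of the difference graph D(G) = G_I(G) minus P(G)
   (removing isolated vertices does not affect the edge set). *)
Definition diff_adj (gT : finGroupType) (x y : gT) : bool :=
  ipg_adj x y && ~~ pg_adj x y.

Definition diff_graph_empty (gT : finGroupType) : Prop :=
  forall x y : gT, ~~ diff_adj x y.

(* Main.v *)
Require Import Defs.
From mathcomp Require Import all_boot all_fingroup all_algebra.
From mathcomp Require Import all_solvable.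

Local Open Scope group_scope.

Lemma dvd_pq (p q d : nat) : prime p -> prime q -> (d %| p * q)%N ->
  [|| d == 1%N, d == p, d == q | d == (p * q)%N].
Proof.
move=> pp pq dd.
have [pd|npd] := boolP (p %| d)%N.
  have p0 : (0 < p)%N by exact: prime_gt0.
  have dE : d = (p * (d %/ p))%N by rewrite mulnC divnK.
  move: dd; rewrite dE dvdn_pmul2l //.
  case/primeP: pq => _ H /H /orP [] /eqP ->.
    by rewrite muln1 eqxx orbT.
  by rewrite eqxx !orbT.
have cp : coprime p d by rewrite prime_coprime.
move: dd; rewrite Gauss_dvdr 1?coprime_sym //.
by case/primeP: pq => _ H /H /orP [] ->; rewrite ?orbT.
Qed.

Lemma key (n p q : nat) (x y : 'I_n.+2) : prime p -> prime q -> n.+2 = (p * q)%N ->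
  x != 1 -> <[x]> :&: <[y]> != 1 -> (x \in <[y]>) || (y \in <[x]>).
Proof.
move=> pp pq nE x1 I1.
have : (#[x] %| p * q)%N.
  by rewrite -nE; have := order_dvdG (in_setT x); rewrite cardsT card_ord.
move/(dvd_pq _ _ _ pp pq) => /or4P [] /eqP ox.
- by move: x1; rewrite -order_eq1 ox eqxx.
- by rewrite -cycle_subG prime_meetG // -orderE ox.
- by rewrite -cycle_subG prime_meetG // -orderE ox.
- have -> : <[x]> = setT.
    apply/eqP; rewrite eqEcard subsetT cardsT card_ord nE -ox. exact: leqnn.
  by apply/orP; right; apply: in_setT.
Qed.

Lemma dir1 (n p q : nat) : prime p -> prime q -> n.+2 = (p * q)%N ->
  forall x y : 'I_n.+2, ~~ diff_adj x y.
Proof.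
move=> pp pq nE x y; apply/negP; rewrite /diff_adj /ipg_adj /pg_adj.
case/andP => /andP [xy H] /negP; apply; rewrite xy /=.
case/or3P: H => [/eqP -> | /eqP -> | I].
- by rewrite group1.
- by rewrite group1 orbT.
have [/eqP -> | x1] := boolP (x == 1); first by rewrite group1.
exact: (key _ _ _ _ _ pp pq nE x1 I).
Qed.

Lemma dir2 (n p q r : nat) : prime p -> prime q -> prime r -> p != q -> r != q ->
  (p * q * r %| n.+2)%N -> exists x y : 'I_n.+2, diff_adj x y.
Proof.
move=> pp pq pr npq nrq dv.
have p0 := prime_gt0 pp; have q0 := prime_gt0 pq; have r0 := prime_gt0 pr.
set m := n.+2 in dv *.
have og : #[(Zp1 : 'I_n.+2)] = m by rewrite order_Zp1.
set g := (Zp1 : 'I_n.+2) in og.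
have dpq : (p * q %| m)%N by apply: dvdn_trans dv; apply: dvdn_mulr.
have dpr : (p * r %| m)%N.
  by apply: dvdn_trans dv; rewrite -mulnA dvdn_pmul2l // dvdn_mull.
set a := (m %/ (p * q))%N; set b := (m %/ (p * r))%N.
have mA : m = (a * (p * q))%N by rewrite divnK.
have mB : m = (b * (p * r))%N by rewrite divnK.
have a0 : (0 < a)%N by move: mA; case: (a) => //.
have b0 : (0 < b)%N by move: mB; case: (b) => //.
have ox : #[g ^+ a] = (p * q)%N.
  by rewrite orderXdiv og mA ?dvdn_mulr // mulKn.
have oy : #[g ^+ b] = (p * r)%N.
  by rewrite orderXdiv og mB ?dvdn_mulr // mulKn.
have aqbr : (a * q = b * r)%N.
  apply/eqP; rewrite -(eqn_pmul2r p0) -!mulnA [(q * p)%N]mulnC [(r * p)%N]mulnC.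
  by rewrite -mA -mB.
have oz : #[g ^+ (a * q)] = p.
  have mA' : m = (p * (a * q))%N by rewrite mA mulnCA.
  rewrite orderXdiv og; last by rewrite {1}mA' dvdn_mull.
  by rewrite {1}mA' mulnK // muln_gt0 a0 q0.
exists (g ^+ a), (g ^+ b).
rewrite /diff_adj /ipg_adj /pg_adj.
have xy : g ^+ a != g ^+ b.
  apply/negP => /eqP E; move: (ox); rewrite E oy => /eqP.
  by rewrite eqn_pmul2l // (negbTE nrq).
rewrite xy /=; apply/andP; split.
  apply/orP; right; apply/orP; right.
  apply/negP => /eqP I.
  have : g ^+ (a * q) \in <[g ^+ a]> :&: <[g ^+ b]>.
    by rewrite inE {2}aqbr !expgM !mem_cycle.
  rewrite I inE -order_eq1 oz => /eqP p1.
  by move: pp; rewrite p1.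
apply/negP => /orP [] H; move: H; rewrite -cycle_subG => /cardSg;
  rewrite -!orderE ox oy dvdn_pmul2l //.
  by rewrite dvdn_prime2 // eq_sym (negbTE nrq).
by rewrite dvdn_prime2 // (negbTE nrq).
Qed.

Local Close Scope group_scope.

Theorem theorem4p3 (m : nat) :
  0 < m -> 2 <= size (primes m) ->
  (diff_graph_empty 'Z_m <->
   exists p q : nat, [/\ prime p, prime q, p != q & m = p * q]).
Proof.
case: m => [|[|n]] // _ hs; split; last first.
  by case=> p [q [pp pq _ E]]; exact: (dir1 _ _ _ pp pq E).
move=> emp.
have uq := primes_uniq n.+2.
case E: (primes n.+2) hs uq => [|p [|q s]] // _.
have : p \in primes n.+2 by rewrite E inE eqxx.
rewrite mem_primes => /and3P [pp _ dp].
have : q \in primes n.+2 by rewrite E !inE eqxx orbT.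
rewrite mem_primes => /and3P [qq _ dq].
rewrite /= inE negb_or => /andP [/andP [npq _] _].
have dpq : (p * q %| n.+2)%N.
  by rewrite Gauss_dvd ?dp ?dq // prime_coprime // dvdn_prime2 // npq.
set k := (n.+2 %/ (p * q))%N.
have mE : n.+2 = (k * (p * q))%N by rewrite divnK.
have [k1|k1] := leqP k 1.
  exists p, q; split => //.
  clearbody k; case: k mE k1 => [|[|k]] // mE _.
  by rewrite mE mul1n.
have pr := pdiv_prime k1.
have dr : (p * q * pdiv k %| n.+2)%N by rewrite mE mulnC dvdn_pmul2r ?pdiv_dvd // muln_gt0 !prime_gt0.
have [rq|rq] := eqVneq (pdiv k) q.
  have nqp : q != p by rewrite eq_sym.
  have [x [y H]] := dir2 n q p (pdiv k) qq pp pr nqp (ltac:(by rewrite rq))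
    (ltac:(by rewrite [(q * p)%N]mulnC)).
  by move: (emp x y); rewrite H.
have [x [y H]] := dir2 n p q (pdiv k) pp qq pr npq rq dr.
by move: (emp x y); rewrite H.
Qed.
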